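(* For all $n\ge1$, $p_{0,n}<\phi$, where $\phi=(1+\sqrt5)/2$.
   Context: $\Phi$ is the partial map of $\mathbb{R}^2$ defined for $p\ne0$ by $\Phi(p,u)=\bigl(p^2(u+1)-1,\ 1/p\bigr)$. For $n\ge1$, the trajectory $T_n$ is the (existing and unique) finite sequence $(p_{j,n},u_{j,n})$, $j=0,\dots,n$, with $(p_{j,n},u_{j,n})=\Phi(p_{j-1,n},u_{j-1,n})$ for $1\le j\le n$, $u_{0,n}=0$, $p_{n,n}=0$, and $p_{j,n}>0$ for $0\le j\le n-1$. *)

(* Defs.v *)
From Stdlib Require Import Reals.
Open Scope R_scope.

Definition Phi (x : R * R) : R * R :=
  let (p, u) := x in (p ^ 2 * (u + 1) - 1, 1 / p).

(* is_trajectory n pu : the finite sequence (pu j), j = 0..n, is the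
   trajectory T_n: it follows Phi, u_{0,n} = 0, p_{n,n} = 0 and
   p_{j,n} > 0 for 0 <= j <= n-1 (so Phi is always applied at p <> 0). *)
Definition is_trajectory (n : nat) (pu : nat -> R * R) : Prop :=
  (forall j, (1 <= j <= n)%nat -> pu j = Phi (pu (j - 1)%nat)) /\
  snd (pu 0%nat) = 0 /\
  fst (pu n) = 0 /\
  (forall j, (j <= n - 1)%nat -> fst (pu j) > 0).

Definition golden : R := (1 + sqrt 5) / 2.

(* Main.v *)
Require Import Defs.
From Stdlib Require Import Reals.
From Stdlib Require Import Lra Lia Psatz.
Open Scope R_scope.

Lemma step_eq (n : nat) (pu : nat -> R * R) j :
  is_trajectory n pu -> (1 <= j <= n)%nat ->
  fst (pu j) = fst (pu (j-1)%nat) ^ 2 * (snd (pu (j-1)%nat) + 1) - 1 /\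
  snd (pu j) = 1 / fst (pu (j-1)%nat).
Proof.
  intros [H _] Hj. rewrite (H j Hj). destruct (pu (j-1)%nat) as [a b]. simpl. auto.
Qed.

Theorem lemma6 (n : nat) (pu : nat -> R * R) :
  (1 <= n)%nat -> is_trajectory n pu -> fst (pu 0%nat) < golden.
Proof.
  intros Hn Ht.
  destruct (Rlt_or_le (fst (pu 0%nat)) golden) as [Hlt|Hge]; [exact Hlt|exfalso].
  pose proof Ht as [_ [Hu0 [Hpn Hpos]]].
  assert (Hs5 : sqrt 5 * sqrt 5 = 5) by (apply sqrt_sqrt; lra).
  assert (Hs5p : 0 < sqrt 5) by (apply sqrt_lt_R0; lra).
  unfold golden in Hge.
  assert (Key : forall k, (k + 1 <= n)%nat ->
            1 <= fst (pu k) /\ fst (pu k) <= fst (pu (k+1)%nat)).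
  { induction k as [|k IH]; intros Hk.
    - destruct (step_eq n pu 1 Ht ltac:(lia)) as [E _].
      simpl in E. rewrite Hu0 in E. simpl. rewrite E.
      set (a := fst (pu 0%nat)) in *. split; nra.
    - destruct (IH ltac:(lia)) as [H1 H2].
      destruct (step_eq n pu (S k + 1) Ht ltac:(lia)) as [E _].
      destruct (step_eq n pu (k + 1) Ht ltac:(lia)) as [_ E2].
      replace (S k + 1 - 1)%nat with (k+1)%nat in E by lia.
      replace (S k + 1)%nat with (k+1+1)%nat in E by lia.
      replace (k + 1 - 1)%nat with k in E2 by lia.
      replace (S k) with (k+1)%nat by lia.
      rewrite E, E2.
      set (a := fst (pu k)) in *. set (b := fst (pu (k+1)%nat)) in *.
      assert (Ht1 : (1/a) * a = 1) by (field; lra).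
      assert (Ht0 : 0 < 1/a) by (apply Rdiv_lt_0_compat; lra).
      split; [lra|]. nra. }
  destruct (Key (n-1)%nat ltac:(lia)) as [K1 K2].
  replace (n - 1 + 1)%nat with n in K2 by lia. lra.
Qed.
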